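(* Let $A$ be a nonempty finite set of $n$ alternatives. A choice rule $C$ on $A$ is responsive if and only if it satisfies capacity-filling and the capacity-wise weaker axiom of revealed preference (CWrARP).
   Context: Let $\mathcal{A}$ be the set of nonempty subsets of $A$. A choice rule assigns to each $(S,q)\in\mathcal{A}\times\{1,\dots,n\}$ a nonempty set $C(S,q)\subseteq S$ with $|C(S,q)|\le q$. A priority ordering is a complete, transitive, antisymmetric binary relation on $A$. $C$ is responsive for a priority ordering $\succ$ if for each $(S,q)$, $C(S,q)$ is obtained by choosing the highest $\succ$-priority alternatives in $S$ until $q$ alternatives are chosen or no alternative is left; $C$ is responsive if it is responsive for some priority ordering. Capacity-filling: $|C(S,q)|=\min\{|S|,q\}$ for all $(S,q)$. CWrARP: for each $S,S'\in\mathcal{A}$, $q,q'\in\{1,\dots,n\}$ and each $a,b\in S\cap S'$, if $a\in C(S,q)$ and $b\in C(S',q')\setminus C(S,q)$, then $a\in C(S',q')$. *)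

(* Defs.v *)
From mathcomp Require Import all_boot.
Set Implicit Arguments. Unset Strict Implicit. Unset Printing Implicit Defensive.

(* A choice rule is represented as a total
   function C : {set A} -> nat -> {set A}; only its values on the domain
   (S nonempty, 1 <= q <= #|A|) matter. *)

Definition in_dom (A : finType) (S : {set A}) (q : nat) : bool :=
  (S != set0) && (0 < q <= #|A|).

Definition is_choice_rule (A : finType) (C : {set A} -> nat -> {set A}) : Prop :=
  forall S q, in_dom S q ->
    [/\ C S q != set0, C S q \subset S & #|C S q| <= q].

(* A priority ordering: complete, transitive, antisymmetric relation.
   [p a b] means "a has (weakly) higher priority than b". *)
Definition priority_ordering (A : finType) (p : rel A) : Prop :=
  total p /\ transitive p /\ antisymmetric p.

(* Choosing the highest-priority alternatives of S one by one until q are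
   chosen or none is left: list S in decreasing priority and take the first q. *)
Definition top_choice (A : finType) (p : rel A) (S : {set A}) (q : nat)
  : {set A} := [set x in take q (sort p (enum S))].

Definition responsive_for (A : finType) (C : {set A} -> nat -> {set A})
  (p : rel A) : Prop :=
  forall S q, in_dom S q -> C S q = top_choice p S q.

Definition responsive (A : finType) (C : {set A} -> nat -> {set A}) : Prop :=
  exists p : rel A, priority_ordering p /\ responsive_for C p.

Definition capacity_filling (A : finType) (C : {set A} -> nat -> {set A})
  : Prop :=
  forall S q, in_dom S q -> #|C S q| = minn #|S| q.

Definition CWrARP (A : finType) (C : {set A} -> nat -> {set A}) : Prop :=
  forall S S' q q', in_dom S q -> in_dom S' q' ->
  forall a b, a \in S :&: S' -> b \in S :&: S' ->
    a \in C S q -> b \in C S' q' :\: C S q -> a \in C S' q'.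

(* Main.v *)
Require Import Defs.
From mathcomp Require Import all_boot.
Set Implicit Arguments. Unset Strict Implicit. Unset Printing Implicit Defensive.

Lemma idx_lt (T : eqType) (p : rel T) (s : seq T) :
  transitive p -> antisymmetric p -> sorted p s ->
  forall x y, x \in s -> y \in s -> p y x -> y != x -> index y s < index x s.
Proof.
move=> tr an so x y xs ys pyx nyx; rewrite ltnNge; apply/negP.
rewrite leq_eqVlt => /orP[/eqP e|lt].
  by move: nyx; rewrite (index_inj x xs ys e) eqxx.
have := sorted_ltn_index tr so x y xs ys lt => pxy.
by move: nyx; rewrite (an x y) ?pxy ?pyx ?eqxx.
Qed.

Lemma top_mem (A : finType) (p : rel A) S q x :
  (x \in top_choice p S q) = (x \in S) && (index x (sort p (enum S)) < q).
Proof.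
rewrite /top_choice inE.
case xS: (x \in S).
  by rewrite in_take // mem_sort mem_enum.
apply/negbTE/negP => /mem_take; by rewrite mem_sort mem_enum xS.
Qed.

Lemma top_up (A : finType) (p : rel A) S q x y :
  priority_ordering p -> x \in top_choice p S q -> y \in S -> p y x ->
  y \in top_choice p S q.
Proof.
move=> [to [tr an]]; rewrite !top_mem => /andP[xS xq] yS pyx.
rewrite yS /=; case: (eqVneq y x) => [->//|nyx].
apply: ltn_trans xq; apply: (idx_lt tr an (sort_sorted to _)) => //.
  by rewrite mem_sort mem_enum.
by rewrite mem_sort mem_enum.
Qed.

Lemma top_card (A : finType) (p : rel A) S q :
  #|top_choice p S q| = minn #|S| q.
Proof.
rewrite /top_choice cardsE; have /card_uniqP -> : uniq (take q (sort p (enum S))).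
  by apply: take_uniq; rewrite sort_uniq enum_uniq.
by rewrite size_take_min size_sort -cardE minnC.
Qed.

Lemma upper_small (A : finType) (p : rel A) S q x (U : {set A}) :
  priority_ordering p -> x \in top_choice p S q ->
  (forall y, y \in U -> [/\ y \in S, p y x & y != x]) ->
  #|U| < minn #|S| q.
Proof.
move=> [to [tr an]] xt HU; rewrite leq_min; apply/andP; split.
  apply: proper_card; apply/properP; split.
    by apply/subsetP => y /HU [].
  exists x; first by move: xt; rewrite top_mem => /andP[].
  by apply/negP => /HU [_ _]; rewrite eqxx.
move: xt; rewrite top_mem => /andP[xS xq].
set s := sort p (enum S).
apply: leq_ltn_trans xq.
apply: (@leq_trans #|[set y in take (index x s) s]|).
  apply: subset_leq_card; apply/subsetP => y /HU [yS pyx nyx].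
  rewrite inE in_take ?mem_sort ?mem_enum //.
  apply: (idx_lt tr an (sort_sorted to _)) => //.
    by rewrite mem_sort mem_enum.
  by rewrite mem_sort mem_enum.
rewrite cardsE; apply: leq_trans (card_size _) _.
by rewrite size_take_min geq_minl.
Qed.

Theorem theorem2 (A : finType) (hA : 0 < #|A|)
  (C : {set A} -> nat -> {set A}) (hC : is_choice_rule C) :
  responsive C <-> capacity_filling C /\ CWrARP C.
Proof.
split.
  move=> [p [po hr]]; split.
    by move=> S q d; rewrite hr // top_card.
  move=> S S' q q' d d' a b; rewrite !inE => /andP[aS aS'] /andP[bS bS'].
  rewrite hr // hr // => ha /andP[hb1 hb2].
  have [to _] := po.
  case/orP: (to a b) => [pab|pba].
    exact: top_up po hb2 aS' pab.
  by move: hb1; rewrite (top_up po ha bS pba).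
move=> [cf cw].
have dom1 : forall S : {set A}, S != set0 -> in_dom S 1.
  by move=> S ne; rewrite /in_dom ne hA.
have single : forall S x y, in_dom S 1 -> x \in C S 1 -> y \in C S 1 -> x = y.
  move=> S x y d hx hy; have [_ _ c1] := hC S 1 d.
  have c2 : #|C S 1| = 1.
    by apply/eqP; rewrite eqn_leq c1 card_gt0; apply/set0Pn; exists x.
  by have [z hz] := cards1P (introT eqP c2); move: hx hy; rewrite hz !inE => /eqP -> /eqP ->.
have warp : forall S S' x y, in_dom S 1 -> in_dom S' 1 -> x \in C S 1 ->
    y \in C S' 1 -> x \in S :&: S' -> y \in S :&: S' -> x = y.
  move=> S S' x y d d' hx hy xi yi.
  case yC: (y \in C S 1); first exact: (single _ _ _ d hx yC).
  apply: (single _ _ _ d' _ hy); apply: (cw S S' 1 1 d d' x y xi yi hx).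
  by rewrite inE yC.
have pick : forall S, in_dom S 1 -> exists x, x \in C S 1.
  by move=> S d; have [/set0Pn [x hx] _ _] := hC S 1 d; exists x.
have sub : forall S x, in_dom S 1 -> x \in C S 1 -> x \in S.
  by move=> S x d; have [_ /subsetP h _] := hC S 1 d; apply: h.
have ne2 : forall a b : A, [set a; b] != set0.
  by move=> a b; apply/set0Pn; exists a; rewrite !inE eqxx.
have ne3 : forall a b c : A, [set a; b; c] != set0.
  by move=> a b c; apply/set0Pn; exists a; rewrite !inE eqxx.
pose p := fun a b : A => a \in C [set a; b] 1.
have po : priority_ordering p.
  split; [|split].
  - move=> a b; rewrite /p.
    have [x hx] := pick _ (dom1 _ (ne2 a b)).
    move: (sub _ _ (dom1 _ (ne2 a b)) hx); rewrite !inE => /orP[]/eqP ex; subst x.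
      by rewrite hx.
    have e : [set b; a] = [set a; b] by rewrite setUC.
    by rewrite e hx orbT.
  - move=> b a c; rewrite /p => hab hbc.
    have d3 := dom1 _ (ne3 a b c).
    have [x hx] := pick _ d3.
    move: (sub _ _ d3 hx); rewrite !inE => /orP[/orP[]|]/eqP ex; subst x.
    + have [y hy] := pick _ (dom1 _ (ne2 a c)).
      have yac := sub _ _ (dom1 _ (ne2 a c)) hy.
      have e : a = y.
        apply: (warp _ _ _ _ d3 (dom1 _ (ne2 a c)) hx hy).
          by rewrite !inE !eqxx ?orbT.
        by move: yac; rewrite !inE => /orP[]/eqP ->; rewrite !eqxx ?orbT.
      by rewrite {1}e.
    + have e : a = b.
        apply: (warp _ _ _ _ (dom1 _ (ne2 a b)) d3 hab hx);
        by rewrite !inE !eqxx ?orbT.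
      by rewrite e.
    + have e : b = c.
        apply: (warp _ _ _ _ (dom1 _ (ne2 b c)) d3 hbc hx);
        by rewrite !inE !eqxx ?orbT.
      by rewrite -e.
  - move=> a b /andP[hab hba].
    apply: (warp _ _ _ _ (dom1 _ (ne2 a b)) (dom1 _ (ne2 b a)) hab hba);
    by rewrite !inE !eqxx ?orbT.
have [to _] := po.
exists p; split => // S q d.
have up : forall a b, a \in C S q -> b \in S -> p b a -> b \in C S q.
  move=> a b ha bS pba; case: (eqVneq b a) => [->//|nba].
  case nb: (b \in C S q) => //.
  have d2 := dom1 _ (ne2 b a).
  have := cw S [set b; a] q 1 d d2 a b.
  have [_ /subsetP hsub _] := hC S q d.
  rewrite !inE !eqxx ?orbT (hsub _ ha) bS => /(_ isT isT ha).
  rewrite nb (pba : b \in C [set b; a] 1) => /(_ isT) hac.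
  by move: nba; rewrite (single _ _ _ d2 pba hac) eqxx.
apply/eqP; rewrite eq_sym eqEcard cf // top_card leqnn andbT.
apply/subsetP => x xt; apply/negPn/negP => nx.
have [_ /subsetP hsub _] := hC S q d.
have HU : forall y, y \in C S q -> [/\ y \in S, p y x & y != x].
  move=> y yC; split; first exact: hsub.
    case/orP: (to y x) => // pxy.
    by move: nx; rewrite (up y x yC _ pxy) //; move: xt; rewrite top_mem => /andP[].
  by apply/eqP => e; move: nx; rewrite -e yC.
have := upper_small po xt HU.
by rewrite cf // ltnn.
Qed.
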